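(* Let $n>k\ge 0$ be integers. There is a bijection between the set $\mathcal{C}_{n-1,k}$ of Pons--Batle words and the set of Young tableaux with walls and holes of type $(k,0,n-1)$. In particular, $|\mathcal{C}_{n-1,k}|=y_{k,0,n-1}$.
   Context: Pons--Batle words: for integers $N\ge k\ge 0$, $\mathcal{C}_{N,k}$ is the set of words over the alphabet $\{\omega_1,\dots,\omega_N\}$ in which each of $\omega_1,\dots,\omega_k$ occurs exactly three times and each of $\omega_{k+1},\dots,\omega_N$ occurs exactly twice, such that in every prefix of the word and for every $i$, either $\omega_i$ does not occur in the prefix, or the number of occurrences of $\omega_i$ in the prefix is at least the number of occurrences of $\omega_j$ in the prefix for every $j>i$. Young tableaux with walls and holes: for integers $k,\ell_1,\ell_2\ge 0$ with $N:=\ell_1+\ell_2\ge k$, a Young tableau with walls and holes of type $(k,\ell_1,\ell_2)$ consists of a subset $S\subseteq\{1,\dots,N\}$ with $|S|=\ell_2$ and a bijective filling of the cells of the following three-row shape with the integers $1,\dots,k+\ell_1+2\ell_2$: the top row has cells in columns $1,\dots,k$, the middle row has cells in columns $1,\dots,N$, and the bottom row has cells exactly in the columns of $S$. The filling must increase from left to right along the top row and along the middle row, and increase from bottom to top within every column; no condition is imposed among the entries of the bottom row (adjacent bottom cells are separated by ''walls''). $y_{k,\ell_1,\ell_2}$ denotes the number of such tableaux (pairs $(S,\text{filling})$). For type $(k,0,n-1)$ the bottom row necessarily occupies all columns $1,\dots,n-1$. *)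

(* Defs.v *)
From mathcomp Require Import all_boot.
Set Implicit Arguments. Unset Strict Implicit. Unset Printing Implicit Defensive.

(* ---------- Pons--Batle words C_{N,k} ----------
   Letter omega_{i+1} is encoded by i : 'I_N.  A word in C_{N,k} has
   3k + 2(N-k) = 2N + k letters (for k <= N), so we represent candidate
   words as (2N+k)-tuples over 'I_N. *)

Definition pb_counts (N k : nat) (w : seq 'I_N) : bool :=
  [forall i : 'I_N, count_mem i w == (if i < k then 3 else 2)].

Definition pb_prefix (N : nat) (w : seq 'I_N) : bool :=
  [forall m : 'I_(size w).+1, forall i : 'I_N,
     (count_mem i (take m w) == 0) ||
     [forall j : 'I_N, (i < j) ==> (count_mem j (take m w) <= count_mem i (take m w))]].

Definition PB (N k : nat) : {set (2 * N + k).-tuple 'I_N} :=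
  [set w : (2 * N + k).-tuple 'I_N | pb_counts k w && pb_prefix w].

(* ---------- Young tableaux with walls and holes of type (k,l1,l2) ----------
   N := l1 + l2 columns, indexed by 'I_N (column j+1 <-> j).
   Entries 1..M with M := k + l1 + 2 l2 are encoded by 'I_M (value v+1 <-> v);
   this shift preserves the order.
   A tableau is (S, top, mid, bot) with
     S   : the set of columns carrying a bottom cell,
     top : entries of the top row (columns 1..k),
     mid : entries of the middle row (columns 1..N),
     bot : entries of the bottom row, bot j = Some _ exactly when j \in S. *)

Definition ywh_data (k l1 l2 : nat) : finType :=
  ({set 'I_(l1 + l2)} * {ffun 'I_k -> 'I_(k + l1 + 2 * l2)}
   * {ffun 'I_(l1 + l2) -> 'I_(k + l1 + 2 * l2)}
   * {ffun 'I_(l1 + l2) -> option 'I_(k + l1 + 2 * l2)})%type.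

Definition ywh_pred (k l1 l2 : nat) (t : ywh_data k l1 l2) : bool :=
  let: (Sc, top, mid, bot) := t in
  let entries := [seq top i | i : 'I_k] ++ [seq mid j | j : 'I_(l1 + l2)]
                 ++ pmap id [seq bot j | j : 'I_(l1 + l2)] in
  [&& #|Sc| == l2,
      [forall j : 'I_(l1 + l2), (j \in Sc) == (bot j != None)],
      uniq entries,
      [forall v : 'I_(k + l1 + 2 * l2), v \in entries],
      [forall i1 : 'I_k, forall i2 : 'I_k, (i1 < i2) ==> (top i1 < top i2)],
      [forall j1 : 'I_(l1 + l2), forall j2 : 'I_(l1 + l2),
          (j1 < j2) ==> (mid j1 < mid j2)],
      [forall i : 'I_k, forall j : 'I_(l1 + l2),
          (nat_of_ord i == nat_of_ord j) ==> (mid j < top i)] &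
      [forall j : 'I_(l1 + l2), forall v : 'I_(k + l1 + 2 * l2),
          (bot j == Some v) ==> (v < mid j)]].

Definition YWH (k l1 l2 : nat) : {set ywh_data k l1 l2} :=
  [set t | ywh_pred t].

Definition y (k l1 l2 : nat) : nat := #|YWH k l1 l2|.

(* Main.v *)
Require Import Defs.
From mathcomp Require Import all_boot.
From mathcomp Require Import zify.
Set Implicit Arguments. Unset Strict Implicit. Unset Printing Implicit Defensive.

Section Occs.
Variable T : eqType.
Fixpoint occs (x : T) (s : seq T) : seq nat :=
  match s with
  | [::] => [::]
  | y :: s' => if y == x then 0 :: map succn (occs x s') else map succn (occs x s')
  end.

Lemma mem_occs x s p : (p \in occs x s) = (p < size s) && (nth x s p == x).
Proof.
elim: s p => [|y s IH] [|p] //=.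
- case: (y == x); first by rewrite inE eqxx.
  by apply/mapP => -[q].
- rewrite ltnS -IH.
  by case: (y == x); rewrite ?inE /= (mem_map succn_inj).
Qed.

Lemma occs_sorted x s : sorted ltn (occs x s).
Proof.
have H l : sorted ltn l -> sorted ltn (map succn l).
  by move=> sl; rewrite sorted_map; apply: sub_sorted sl => a b.
elim: s => [|y s IH] //=.
case: (y == x) => //=; last by apply: H.
rewrite path_sortedE; last exact: ltn_trans.
rewrite H // andbT; apply/allP => q /mapP [r _ ->]. by [].
Qed.

Lemma size_occs x s : size (occs x s) = count_mem x s.
Proof. by elim: s => [|y s IH] //=; case: (y == x); rewrite /= size_map IH. Qed.

Lemma count_take_occs x s m :
  count_mem x (take m s) = count (fun q => q < m) (occs x s).
Proof.
have c0 l : count (fun q => q < 0) l = 0 by elim: l.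
elim: s m => [|y s IH] [|m] //=.
have E : count (fun q => q < m.+1) (map succn (occs x s)) = count_mem x (take m s).
  by rewrite count_map IH; apply: eq_count => q /=.
by case: (y == x); rewrite /= E.
Qed.
End Occs.

Lemma uniq_map_inj (T1 T2 : eqType) (f : T1 -> T2) s x y :
  uniq (map f s) -> x \in s -> y \in s -> f x = f y -> x = y.
Proof.
elim: s => [|a s IH] //= /andP [na us]; rewrite !inE.
case/orP => [/eqP-> | xs]; case/orP => [/eqP-> | ys] //.
- by move=> E; move: na; rewrite E map_f.
- by move=> E; move: na; rewrite -E map_f.
- exact: IH.
Qed.

Section Sorted.
Variable s : seq nat.
Hypothesis ss : sorted ltn s.

Lemma count_lt_nth r : r < size s -> count (fun q => q < nth 0 s r) s = r.
Proof.
elim: s ss r => [|a l IH] //= sl [|r] hr /=.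
- rewrite ltnn add0n; rewrite path_sortedE in sl; last exact: ltn_trans.
  case/andP: sl => /allP A _.
  rewrite (eq_in_count (a2 := pred0)) ?count_pred0 // => q /A /= aq.
  by rewrite ltnNge ltnW.
- rewrite path_sortedE in sl; last exact: ltn_trans.
  case/andP: sl => /allP A sl.
  have /= h := A _ (mem_nth 0 hr).
  by rewrite h IH.
Qed.

Lemma count_le_nth r : r < size s -> count (fun q => q < (nth 0 s r).+1) s = r.+1.
Proof.
elim: s ss r => [|a l IH] //= sl [|r] hr /=.
- rewrite ltnSn; rewrite path_sortedE in sl; last exact: ltn_trans.
  case/andP: sl => /allP A _.
  rewrite (eq_in_count (a2 := pred0)) ?count_pred0 // => q /A /= aq.
  by rewrite ltnS leqNgt aq.
- rewrite path_sortedE in sl; last exact: ltn_trans.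
  case/andP: sl => /allP A sl.
  have /= h := A _ (mem_nth 0 hr).
  by rewrite ltnS ltnW // IH.
Qed.

Lemma count_le r m : r < size s -> m <= nth 0 s r -> count (fun q => q < m) s <= r.
Proof.
move=> hr hm; rewrite -[X in _ <= X](count_lt_nth hr); apply: sub_count => q /= qm.
exact: leq_trans qm hm.
Qed.

Lemma count_gt r m : r < size s -> nth 0 s r < m -> r < count (fun q => q < m) s.
Proof.
move=> hr hm; rewrite -(count_le_nth hr) ; apply: sub_count => q /= qm.
exact: leq_trans qm hm.
Qed.
End Sorted.

Lemma count_mono (s : seq nat) m1 m2 : m1 <= m2 ->
  count (fun q => q < m1) s <= count (fun q => q < m2) s.
Proof. by move=> h; apply: sub_count => q /= qm; exact: leq_trans qm h. Qed.

Lemma uniq_cat_disj (T : eqType) (a b : seq T) x : uniq (a ++ b) -> x \in a -> x \in b -> False.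
Proof. rewrite cat_uniq => /and3P [_ /hasPn H _] xa xb. by move: (H x xb); rewrite /= xa. Qed.

Lemma pmap_Some (T : Type) (l : seq T) : pmap id (map Some l) = l.
Proof. by elim: l => //= a l ->. Qed.

Section Bij.
Variables (N k : nat).
Hypothesis hk : k <= N.

Definition word := (2 * N + k).-tuple 'I_N.
Definition tab := ywh_data k 0 N.

Lemma leNM : N <= k + 0 + 2 * N. Proof. lia. Qed.
Definition toM (j : 'I_N) (p : nat) : 'I_(k + 0 + 2 * N) := insubd (widen_ord leNM j) p.
Lemma val_toM j p : p < k + 0 + 2 * N -> nat_of_ord (toM j p) = p.
Proof. by move=> h; change (val (toM j p) = p); rewrite /toM val_insubd h. Qed.
Definition wk (i : 'I_k) : 'I_N := widen_ord hk i.

Definition fw (w : word) : tab :=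
  (setT, [ffun i => toM (wk i) (nth 0 (occs (wk i) w) 2)],
         [ffun j => toM j (nth 0 (occs j w) 1)],
         [ffun j => Some (toM j (nth 0 (occs j w) 0))]).

Definition tS (t : tab) := t.1.1.1.
Definition ttop (t : tab) := t.1.1.2.
Definition tmid (t : tab) := t.1.2.
Definition tbot (t : tab) := t.2.
Definition bv (t : tab) (j : 'I_N) : 'I_(k + 0 + 2 * N) := odflt (tmid t j) (tbot t j).
Definition topl (t : tab) (j : 'I_N) : seq nat :=
  match (insub (val j) : option 'I_k) with Some i => [:: nat_of_ord (ttop t i)] | None => [::] end.
Definition col (t : tab) (j : 'I_N) : seq nat := [:: nat_of_ord (bv t j), nat_of_ord (tmid t j) & topl t j].

Lemma Npos (p : 'I_(2 * N + k)) : 0 < N. Proof. have := ltn_ord p. lia. Qed.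
Definition letter (t : tab) (p : 'I_(2 * N + k)) : 'I_N :=
  odflt (Ordinal (Npos p)) [pick j : 'I_N | val p \in col t j].
Definition gt (t : tab) : word := [tuple letter t p | p < 2 * N + k].

Lemma colP t j p : p \in col t j ->
  [\/ p = nat_of_ord (bv t j), p = nat_of_ord (tmid t j) | exists i : 'I_k, wk i = j /\ p = nat_of_ord (ttop t i)].
Proof.
rewrite /col /topl; case: insubP => [i _ vi|_]; rewrite !inE ?orbF.
- case/or3P => /eqP ->; [exact: Or31 | exact: Or32 | apply: Or33].
  by exists i; split => //; apply: val_inj.
- case/orP => /eqP ->.
    by apply: Or31.
  by apply: Or32.
Qed.

Lemma col_lt t j p : p \in col t j -> p < k + 0 + 2 * N.
Proof. by case/colP => [->|->|[i [_ ->]]]; apply: ltn_ord. Qed.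

Lemma size_col t j : size (col t j) = if j < k then 3 else 2.
Proof.
rewrite /col /topl; case: insubP => [i hi vi | hi] /=; first by rewrite hi.
by rewrite (negbTE hi).
Qed.

Lemma ywhP t : t \in YWH k 0 N ->
  [/\ tS t = setT, forall j, tbot t j = Some (bv t j),
      forall v : 'I_(k + 0 + 2 * N), exists j, val v \in col t j,
      forall p j1 j2, p \in col t j1 -> p \in col t j2 -> j1 = j2 &
      [/\ forall j1 j2 : 'I_N, j1 < j2 -> tmid t j1 < tmid t j2,
          forall i1 i2 : 'I_k, i1 < i2 -> ttop t i1 < ttop t i2,
          forall j, nat_of_ord (bv t j) < nat_of_ord (tmid t j) &
          forall (i : 'I_k), tmid t (wk i) < ttop t i]].
Proof.
case: t => [[[Sc top] mid] bot]; rewrite inE /ywh_pred.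
move=> /andP[/eqP cS /andP[/forallP hS /andP[U /andP[/forallP C /andP[/forallP Tp
   /andP[/forallP Md /andP[/forallP MT /forallP BM]]]]]]].
have ScT : Sc = setT.
  by apply/eqP; rewrite eqEcard subsetT cardsT card_ord cS ?add0n leqnn.
have bS : forall j, bot j = Some (bv (Sc, top, mid, bot) j).
  move=> j; move: (hS j); rewrite ScT in_setT /bv /tbot /tmid /=.
  by case: (bot j).
rewrite /image_mem in U C.
have E3 : pmap id (map bot (enum 'I_(0 + N))) = map (bv (Sc, top, mid, bot)) (enum 'I_N).
  by rewrite (eq_map bS) map_comp pmap_Some.
rewrite E3 in U C.
set a := map top _ in U C.
set b := map mid _ in U C.
set c := map (bv _) _ in U C.
have Ua : uniq a by move: U; rewrite cat_uniq => /and3P[].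
have Ubc : uniq (b ++ c) by move: U; rewrite cat_uniq => /and3P[].
have Ub : uniq b by move: Ubc; rewrite cat_uniq => /and3P[].
have Uc : uniq c by move: Ubc; rewrite cat_uniq => /and3P[].
have Dab x : x \in a -> x \in b -> False.
  by move=> xa xb; apply: (uniq_cat_disj U xa); rewrite mem_cat xb.
have Dac x : x \in a -> x \in c -> False.
  by move=> xa xc; apply: (uniq_cat_disj U xa); rewrite mem_cat xc orbT.
have Dbc x : x \in b -> x \in c -> False.
  by move=> xb xc; apply: (uniq_cat_disj Ubc xb).
have ina i : top i \in a by apply: map_f; by rewrite mem_enum.
have inb j : mid j \in b by apply: map_f; by rewrite mem_enum.
have inc j : bv (Sc, top, mid, bot) j \in c by apply: map_f; by rewrite mem_enum.
split => //.
- move=> v; move: (C v); rewrite !mem_cat => /or3P [].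
  + case/mapP => i _ ->; exists (wk i).
    by rewrite /col /topl /= valK !inE eqxx !orbT.
  + case/mapP => j _ ->; exists j.
    by rewrite /col !inE eqxx orbT.
  + case/mapP => j _ ->; exists j.
    by rewrite /col !inE eqxx.
- move=> p j1 j2 /colP h1 /colP h2.
  case: h1 => [e1|e1|[i1 [w1 e1]]]; case: h2 => [e2|e2|[i2 [w2 e2]]];
    rewrite e1 in e2; move/val_inj: e2 => e2; rewrite /ttop /tmid /= in e2.
  + by apply: (uniq_map_inj Uc _ _ e2); rewrite mem_enum.
  + exfalso; apply: (Dbc _ (inb j2)); rewrite -e2; apply: map_f; by rewrite mem_enum.
  + exfalso; apply: (Dac _ (ina i2)); rewrite -e2; apply: map_f; by rewrite mem_enum.
  + exfalso; apply: (Dbc _ (inb j1)); rewrite e2; apply: map_f; by rewrite mem_enum.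
  + by apply: (uniq_map_inj Ub _ _ e2); rewrite mem_enum.
  + exfalso; apply: (Dab _ (ina i2)); rewrite -e2; apply: map_f; by rewrite mem_enum.
  + exfalso; apply: (Dac _ (ina i1)); rewrite e2; apply: map_f; by rewrite mem_enum.
  + exfalso; apply: (Dab _ (ina i1)); rewrite e2; apply: map_f; by rewrite mem_enum.
  + by rewrite -w1 -w2 (uniq_map_inj Ua _ _ e2) // mem_enum.
- split.
  + by move=> j1 j2 h; move: (Md j1) => /forallP /(_ j2) /implyP; apply.
  + by move=> i1 i2 h; move: (Tp i1) => /forallP /(_ i2) /implyP; apply.
  + move=> j; move: (BM j) => /forallP /(_ (bv (Sc, top, mid, bot) j)) /implyP; apply.
    by rewrite bS.
  + move=> i; move: (MT i) => /forallP /(_ (wk i)) /implyP; apply. by [].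
Qed.


Lemma col_sorted t j : t \in YWH k 0 N -> sorted ltn (col t j).
Proof.
move=> ht; have [_ _ _ _ [_ _ BM MT]] := ywhP ht.
rewrite /col /topl; case: insubP => [i _ vi | _] /=; rewrite BM //=.
have -> : j = wk i by apply: val_inj.
by rewrite MT.
Qed.

Lemma letterP t p j : t \in YWH k 0 N -> (letter t p == j) = (val p \in col t j).
Proof.
move=> ht; have [_ _ cov uq _] := ywhP ht.
rewrite /letter; case: pickP => [j' Hj' | H] /=.
- apply/eqP/idP => [<- // | hj]; exact: (uq _ _ _ Hj' hj).
- exfalso; have hp : nat_of_ord p < k + 0 + 2 * N by have := ltn_ord p; lia.
  have [j0 hj0] := cov (Ordinal hp).
  by move: (H j0); rewrite /= hj0.
Qed.

Lemma occs_gt t j : t \in YWH k 0 N -> occs j (gt t) = col t j.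
Proof.
move=> ht; apply: (irr_sorted_eq ltn_trans ltnn (occs_sorted _ _) (col_sorted j ht)) => p.
rewrite mem_occs size_tuple; case: (ltnP p (2 * N + k)) => hp /=.
- by rewrite -(tnth_nth j (gt t) (Ordinal hp)) tnth_mktuple letterP.
- apply/esym/negbTE/negP => /col_lt; lia.
Qed.

Lemma col_cmp t (i j : 'I_N) m : t \in YWH k 0 N -> i < j ->
  count (fun q => q < m) (col t i) != 0 ->
  count (fun q => q < m) (col t j) <= count (fun q => q < m) (col t i).
Proof.
move=> ht ij; have [_ _ _ _ [Md Tp BM MT]] := ywhP ht.
have hb1 := BM i; have hb2 := BM j; have hm := Md i j ij.
rewrite /col /topl; case: insubP => [ii hi vi | hi]; case: insubP => [jj hj vj | hj] /=.
- have e1 : wk ii = i by apply: val_inj.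
  have e2 : wk jj = j by apply: val_inj.
  have ht1 := MT ii; have ht2 := MT jj; rewrite e1 in ht1; rewrite e2 in ht2.
  have ht3 : ttop t ii < ttop t jj by apply: Tp; rewrite vi vj.
  move: hb1 hb2 hm ht1 ht2 ht3.
  set b1 := nat_of_ord (bv t i); set b2 := nat_of_ord (bv t j).
  set m1 := nat_of_ord (tmid t i); set m2 := nat_of_ord (tmid t j).
  set t1 := nat_of_ord (ttop t ii); set t2 := nat_of_ord (ttop t jj).
  lia.
- move: hb1 hb2 hm.
  set b1 := nat_of_ord (bv t i); set b2 := nat_of_ord (bv t j).
  set m1 := nat_of_ord (tmid t i); set m2 := nat_of_ord (tmid t j).
  lia.
- exfalso; move: hi hj ij; rewrite /=; lia.
- move: hb1 hb2 hm.
  set b1 := nat_of_ord (bv t i); set b2 := nat_of_ord (bv t j).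
  set m1 := nat_of_ord (tmid t i); set m2 := nat_of_ord (tmid t j).
  lia.
Qed.

Lemma gt_PB t : t \in YWH k 0 N -> gt t \in PB N k.
Proof.
move=> ht; rewrite inE; apply/andP; split.
- apply/forallP => j; by rewrite -size_occs occs_gt // size_col.
- apply/forallP => m; apply/forallP => i.
  rewrite (count_take_occs i (gt t) m) (occs_gt i ht).
  case: (eqVneq (count (fun q => q < m) (col t i)) 0) => [-> // | nz] /=.
  apply/forallP => j; apply/implyP => ij.
  rewrite (count_take_occs j (gt t) m) (occs_gt j ht).
  exact: col_cmp.
Qed.


Lemma PBc w j : w \in PB N k -> size (occs j w) = if j < k then 3 else 2.
Proof. by rewrite inE => /andP [/forallP /(_ j) /eqP <- _]; exact: size_occs. Qed.

Lemma PBp (w : word) m (i j : 'I_N) : w \in PB N k -> m <= size w -> i < j ->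
  count_mem i (take m w) = 0 \/ count_mem j (take m w) <= count_mem i (take m w).
Proof.
rewrite inE => /andP [_ /forallP H] hm ij.
have hm' : m < (size w).+1 by rewrite ltnS.
move: (H (Ordinal hm')) => /forallP /(_ i) /orP [/eqP /= -> | /forallP /(_ j) /implyP hj].
- by left.
- by right; apply: hj.
Qed.

Lemma ord_occ (w : word) r (i j : 'I_N) : w \in PB N k -> 0 < r -> i < j ->
  r < size (occs j w) -> nth 0 (occs i w) r < nth 0 (occs j w) r.
Proof.
move=> hw r1 ij hr.
have soi := occs_sorted i w; have soj := occs_sorted j w.
have := mem_nth 0 hr; rewrite mem_occs => /andP [plt /eqP pj].
have cj := count_le_nth soj hr.
have szi : 0 < size (occs i w) by rewrite (PBc i hw); case: ifP.
have [ci0 | ci] := PBp hw plt ij.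
- exfalso; rewrite (count_take_occs i w _) in ci0.
  have pq : nth 0 (occs j w) r < nth 0 (occs i w) 0.
    rewrite ltnNge; apply/negP => qp.
    by have := count_gt soi szi (m := (nth 0 (occs j w) r).+1) qp; rewrite ci0.
  have := mem_nth 0 szi; rewrite mem_occs => /andP [qlt _].
  have c1 := count_le_nth soi szi.
  have mono := count_mono (occs j w) (m1 := (nth 0 (occs j w) r).+1)
     (m2 := (nth 0 (occs i w) 0).+1) (ltnW pq).
  have [c2|c2] := PBp hw qlt ij; rewrite (count_take_occs i w _) in c2.
  + by rewrite c1 in c2.
  + rewrite (count_take_occs j w _) c1 in c2.
    by have := leq_trans mono c2; rewrite cj ltnS leqn0 => /eqP r0; rewrite r0 in r1.
- rewrite (count_take_occs i w _) (count_take_occs j w _) cj in ci.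
  have hri : r < size (occs i w) by apply: leq_trans ci (count_size _ _).
  have hlt : nth 0 (occs i w) r < (nth 0 (occs j w) r).+1.
    rewrite ltnNge; apply/negP => h; by have := leq_trans ci (count_le soi hri h); rewrite ltnn.
  have := mem_nth 0 hri; rewrite mem_occs => /andP [_ /eqP e].
  rewrite ltn_neqAle -ltnS hlt andbT; apply/eqP => E; move: e.
  rewrite E (set_nth_default j i plt) pj => ji.
  by move: ij; rewrite ji ltnn.
Qed.


Lemma vM (w : word) (j : 'I_N) r : r < size (occs j w) ->
  nat_of_ord (toM j (nth 0 (occs j w) r)) = nth 0 (occs j w) r.
Proof.
move=> hr; rewrite val_toM //.
have := mem_nth 0 hr; rewrite mem_occs size_tuple => /andP [h _].
by apply: leq_trans h _; rewrite addn0 addnC.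
Qed.

Lemma fw_YWH w : w \in PB N k -> fw w \in YWH k 0 N.
Proof.
move=> hw.
have sz1 j : 1 < size (occs j w) by rewrite (PBc j hw); case: ifP.
have sz0 j : 0 < size (occs j w) by apply: ltnW (sz1 j).
have szk (i : 'I_k) : size (occs (wk i) w) = 3 by rewrite (PBc _ hw) /= ltn_ord.
have so j := occs_sorted j w.
rewrite inE /ywh_pred /fw /image_mem /=.
set E := (_ ++ _ ++ _).
have cov : forall v, v \in E.
  move=> v; rewrite /E !mem_cat.
  have hp : nat_of_ord v < 2 * N + k by have := ltn_ord v; lia.
  set jv := tnth w (Ordinal hp).
  have pin : nat_of_ord v \in occs jv w.
    rewrite mem_occs size_tuple hp /=.
    by rewrite [X in _ == X](tnth_nth jv).
  have hr := index_mem (nat_of_ord v) (occs jv w); rewrite pin in hr.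
  have er := nth_index 0 pin.
  move: hr er; set r := index _ _ => hr er.
  have := PBc jv hw; case: r hr er => [|[|[|r]]] hr er hs.
  - apply/orP; right; apply/orP; right.
    rewrite mem_pmap map_id; apply/mapP; exists jv; first by rewrite mem_enum.
    by rewrite ffunE; congr Some; apply: val_inj; rewrite /= vM // er.
  - apply/orP; right; apply/orP; left.
    apply/mapP; exists jv; first by rewrite mem_enum.
    by rewrite ffunE; apply: val_inj; rewrite /= vM // er.
  - apply/orP; left.
    have hjk : jv < k by move: hr; rewrite hs; case: (jv < k).
    apply/mapP; exists (Ordinal hjk); first by rewrite mem_enum.
    have ew : wk (Ordinal hjk) = jv by apply: val_inj.
    by rewrite ffunE ew; apply: val_inj; rewrite /= vM // er.
  - by move: hr; rewrite hs; case: (jv < k).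
rewrite cardsT card_ord eqxx /=.
apply/andP; split; first by apply/forallP => j; rewrite ffunE in_setT.
apply/andP; split.
  apply: (@leq_size_uniq _ (enum 'I_(k + 0 + 2 * N))); [exact: enum_uniq | by move=> v _ | ].
  rewrite /E !size_cat !size_map size_pmap.
  apply: leq_trans (leq_add (leqnn _) (leq_add (leqnn _) (count_size _ _))) _.
  rewrite size_map -?enumT !size_enum_ord; lia.
apply/andP; split; first by apply/forallP => v; exact: cov.
apply/andP; split.
  apply/forallP => i1; apply/forallP => i2; apply/implyP => h.
  rewrite !ffunE vM ?szk // vM ?szk //; apply: ord_occ => //; by rewrite szk.
apply/andP; split.
  apply/forallP => j1; apply/forallP => j2; apply/implyP => h.
  rewrite !ffunE vM ?sz1 // vM ?sz1 //; apply: ord_occ => //; exact: sz1.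
apply/andP; split.
  apply/forallP => i; apply/forallP => j; apply/implyP => /eqP e.
  have ew : wk i = j by apply: val_inj.
  have sj := szk i; rewrite ew in sj.
  rewrite !ffunE ew vM ?sj // vM ?sj //.
  by apply: (sorted_ltn_nth ltn_trans 0 (so _)); rewrite ?inE ?sj.
apply/forallP => j; apply/forallP => v; apply/implyP; rewrite !ffunE => /eqP [<-].
rewrite vM ?sz1 // vM ?sz0 //.
by apply: (sorted_ltn_nth ltn_trans 0 (so _)); rewrite ?inE ?sz1 ?sz0.
Qed.


Lemma colf w j : w \in PB N k -> col (fw w) j = occs j w.
Proof.
move=> hw; have hs := PBc j hw.
rewrite /col /bv /topl /tmid /tbot /ttop /= !ffunE /=.
case: insubP => [i hi vi | hi] /=.
- have ew : wk i = j by apply: val_inj.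
  rewrite ffunE ew; rewrite hi in hs.
  rewrite !vM ?hs //.
  by case: (occs j w) hs => [|a [|b [|c [|d l]]]].
- rewrite (negbTE hi) in hs; rewrite !vM ?hs //.
  by case: (occs j w) hs => [|a [|b [|c l]]].
Qed.

Lemma gfK w : w \in PB N k -> gt (fw w) = w.
Proof.
move=> hw; apply: eq_from_tnth => p; rewrite tnth_mktuple; apply/eqP.
rewrite letterP ?fw_YWH // colf // mem_occs size_tuple ltn_ord /=.
by rewrite [X in _ == X](tnth_nth (tnth w p)).
Qed.

Lemma toM_ord j (x : 'I_(k + 0 + 2 * N)) : toM j (nat_of_ord x) = x.
Proof. by apply: val_inj; rewrite /toM val_insubd ltn_ord. Qed.

Lemma fgK t : t \in YWH k 0 N -> fw (gt t) = t.
Proof.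
move=> ht; have [ScT bS _ _ _] := ywhP ht.
have og j := occs_gt j ht.
move: ScT bS og; case: t ht => [[[Sc top] mid] bot] ht ScT bS og.
rewrite /tS /tbot /= in ScT bS.
rewrite /fw ScT; congr (_, _, _, _); apply/ffunP => j; rewrite !ffunE og.
- by rewrite /col /topl /= valK /= toM_ord.
- by rewrite /col /= toM_ord.
- by rewrite /col /= toM_ord bS.
Qed.

End Bij.

Unset Implicit Arguments.

Theorem lemma8 (n k : nat) (hkn : k < n) :
  (exists f : {w | w \in PB (n - 1) k} -> {t | t \in YWH k 0 (n - 1)},
      bijective f)
  /\ #|PB (n - 1) k| = y k 0 (n - 1).
Proof.
have hk : k <= n - 1 by lia.
pose F := fun w : {w | w \in PB (n - 1) k} =>
  exist (fun t => t \in YWH k 0 (n - 1)) (fw hk (val w)) (fw_YWH hk (valP w)).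
pose G := fun t : {t | t \in YWH k 0 (n - 1)} =>
  exist (fun w => w \in PB (n - 1) k) (gt hk (val t)) (gt_PB hk (valP t)).
have bF : bijective F.
  exists G => [w|t]; apply: val_inj => /=; [exact: gfK (valP w) | exact: fgK (valP t)].
split; first by exists F.
have := bij_eq_card bF; rewrite !card_sig /y => E.
have e1 : #|[pred x | x \in PB (n - 1) k]| = #|PB (n - 1) k| by apply: eq_card.
have e2 : #|[pred x | x \in YWH k 0 (n - 1)]| = #|YWH k 0 (n - 1)| by apply: eq_card.
by rewrite -e1 -e2.
Qed.
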